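(* Let $\lambda>0$, $v_2<v_1$ with either $v_2<0<v_1$ or $0<v_2<v_1$, $t\ge0$ and $j\in\{1,2\}$. With $\Delta_j^\lambda(\xi,t)$ the mean-square distance (defined in the context) between the reset process with reset rate $\xi>0$ and the process without resets, one has $$\lim_{\xi\to+\infty}\Delta_j^\lambda(\xi,t)=E_j[X^2(t)]=\frac{t^2[3v_j^2+\lambda t(v_1^2+v_1v_2+v_2^2)]}{3(1+\lambda t)}.$$
   Context: GCP with intensity $\lambda>0$: a Poisson process whose rate is random, exponentially distributed with mean $\lambda$; increments satisfy $P\{\tilde N_\lambda(t+s)-\tilde N_\lambda(t)=k\}=\frac{1}{1+\lambda s}(\frac{\lambda s}{1+\lambda s})^k$. Process without resets $X(t)$: a particle starts at the origin with velocity $v_j$ ($v_1,v_2\neq0$, $v_2<v_1$), moves with velocity alternating between $v_1$ and $v_2$, the periods at velocity $v_1$ and at $v_2$ governed by two independent GCPs of intensity $\lambda$; its law given $V(0)=v_j$ has generalized density $p(x,t|v_j)=\frac{\delta(x-v_jt)}{1+\lambda t}+\mathbb 1_{\{v_2t<x<v_1t\}}\frac{\lambda}{(v_1-v_2)(1+\lambda t)}$ ($\delta$ Dirac delta), with $E_j[X(t)]=\frac{t[2v_j+\lambda t(v_1+v_2)]}{2(1+\lambda t)}$ and $E_j[X^2(t)]$ as in the claim. Reset process $\tilde X(t)$ (reset rate $\xi>0$): same dynamics but instantaneously reset to the origin at the epochs of an independent Poisson process of rate $\xi$, restarting afresh with velocity $v_j$; its density is $\tilde p(x,t|v_j)=e^{-\xi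 t}p(x,t|v_j)+\xi\int_0^te^{-\xi s}p(x,s|v_j)ds$. $E_j$ denotes expectation conditional on start at the origin with velocity $v_j$. Mean-square distance: $\Delta_j^\lambda(\xi,t):=E_j[\tilde X^2(t)]+E_j[X^2(t)]-2E_j[\tilde X(t)]E_j[X(t)]$. *)

(* Defs.v *)
From Stdlib Require Import Reals.
From Coquelicot Require Import Coquelicot.
Open Scope R_scope.

Definition vel (v1 v2 : R) (j : nat) : R := if Nat.eqb j 1 then v1 else v2.

(* E_j[f(X(t))] computed from the generalized density
   p(x,t|v_j) = delta(x - v_j t)/(1+lam t)
              + 1_{v2 t < x < v1 t} lam / ((v1-v2)(1+lam t)). *)
Definition expect_free (lam v1 v2 : R) (j : nat) (f : R -> R) (t : R) : R :=
  f (vel v1 v2 j * t) / (1 + lam * t)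
  + lam / ((v1 - v2) * (1 + lam * t)) * RInt f (v2 * t) (v1 * t).

(* E_j[f(X~(t))] computed from the reset density
   p~(x,t|v_j) = e^{-xi t} p(x,t|v_j) + xi int_0^t e^{-xi s} p(x,s|v_j) ds. *)
Definition expect_reset (lam xi v1 v2 : R) (j : nat) (f : R -> R) (t : R) : R :=
  exp (- xi * t) * expect_free lam v1 v2 j f t
  + xi * RInt (fun s => exp (- xi * s) * expect_free lam v1 v2 j f s) 0 t.

Definition msd_Delta (lam v1 v2 : R) (j : nat) (xi t : R) : R :=
  expect_reset lam xi v1 v2 j (fun x => x ^ 2) t
  + expect_free lam v1 v2 j (fun x => x ^ 2) t
  - 2 * expect_reset lam xi v1 v2 j (fun x => x) t
      * expect_free lam v1 v2 j (fun x => x) t.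

(* Main.v *)
Require Import Defs.
From Stdlib Require Import Reals Lra Psatz.
From Coquelicot Require Import Coquelicot.
Open Scope R_scope.

Lemma cont_of_der (f : R -> R) x : ex_derive f x -> continuous f x.
Proof. intros H. apply (ex_derive_continuous (K:=R_AbsRing) (V:=R_NormedModule)). exact H. Qed.

Lemma lim_inv_bound (R0 : R -> R) (C : R) : 0 <= C ->
  (forall xi, 0 < xi -> Rabs (R0 xi) <= C / xi) -> is_lim R0 p_infty 0.
Proof.
  intros HC H. apply is_lim_spec. intros eps. simpl.
  exists ((C + 1) / eps). intros x Hx.
  assert (He := cond_pos eps).
  assert (Hx0 : 0 < x).
  { apply Rlt_le_trans with ((C+1)/eps); [apply Rdiv_lt_0_compat; lra | lra]. }
  rewrite Rminus_0_r. eapply Rle_lt_trans. apply H; auto.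
  apply Rmult_lt_reg_r with x; auto. unfold Rdiv. rewrite Rmult_assoc, Rinv_l by lra.
  assert ((C+1) < eps * x).
  { apply Rmult_lt_reg_r with (/ eps). apply Rinv_0_lt_compat; lra.
    replace (eps * x * / eps) with x by (field; lra). exact Hx. }
  lra.
Qed.

Lemma int_sexp (K xi t : R) : 0 < xi ->
  RInt (fun s => K * s * exp (- xi * s)) 0 t
  = K / xi ^ 2 - K * (t / xi + 1 / xi ^ 2) * exp (- xi * t).
Proof.
  intros Hxi.
  apply is_RInt_unique.
  set (F := fun s => - K * (s / xi + 1 / xi ^ 2) * exp (- xi * s)).
  replace (K / xi ^ 2 - K * (t / xi + 1 / xi ^ 2) * exp (- xi * t)) with (minus (F t) (F 0)).
  2:{ unfold F, minus, plus, opp; simpl. replace (- xi * 0) with 0 by ring. rewrite exp_0. field. lra. }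
  refine (is_RInt_derive F _ 0 t _ _).
  - intros x _. unfold F. auto_derive; auto. field. lra.
  - intros x _. apply cont_of_der. auto_derive. auto.
Qed.

Lemma int_msexp (K xi t : R) : 0 < xi ->
  RInt (fun s => - (K * s * exp (- xi * s))) 0 t
  = - (K / xi ^ 2 - K * (t / xi + 1 / xi ^ 2) * exp (- xi * t)).
Proof.
  intros Hxi.
  apply is_RInt_unique.
  set (F := fun s => K * (s / xi + 1 / xi ^ 2) * exp (- xi * s)).
  replace (- (K / xi ^ 2 - K * (t / xi + 1 / xi ^ 2) * exp (- xi * t))) with (minus (F t) (F 0)).
  2:{ unfold F, minus, plus, opp; simpl. replace (- xi * 0) with 0 by ring. rewrite exp_0. field. lra. }
  refine (is_RInt_derive F _ 0 t _ _).
  - intros x _. unfold F. auto_derive; auto. field. lra.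
  - intros x _. apply cont_of_der. auto_derive. auto.
Qed.

Lemma decay (G : R -> R) (K t : R) : 0 <= t -> 0 <= K ->
  (forall s, 0 <= s <= t -> continuous G s) ->
  (forall s, 0 <= s <= t -> Rabs (G s) <= K * s) ->
  is_lim (fun xi => exp (- xi * t) * G t
                    + xi * RInt (fun s => exp (- xi * s) * G s) 0 t) p_infty 0.
Proof.
  intros Ht HK Hc Hb.
  apply lim_inv_bound with (2 * K). lra.
  intros xi Hxi.
  assert (Hex : ex_RInt (fun s => exp (- xi * s) * G s) 0 t).
  { apply (ex_RInt_continuous (V:=R_CompleteNormedModule)). intros z Hz.
    rewrite Rmin_left in Hz by lra. rewrite Rmax_right in Hz by lra.
    apply (continuous_mult (U:=R_UniformSpace) (K:=R_AbsRing) (fun s => exp (-xi*s)) G z). apply cont_of_der. auto_derive. auto. apply Hc; lra. }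
  assert (Hex2 : forall c, ex_RInt (fun s => c * (K * s * exp (- xi * s))) 0 t).
  { intros c. apply (ex_RInt_continuous (V:=R_CompleteNormedModule)). intros z Hz. apply cont_of_der. auto_derive. auto. }
  assert (Hup : RInt (fun s => exp (- xi * s) * G s) 0 t <= RInt (fun s => K * s * exp (- xi * s)) 0 t).
  { apply RInt_le; auto.
    - eapply ex_RInt_ext. 2: apply (Hex2 1). intros; simpl; ring.
    - intros x Hx. specialize (Hb x ltac:(lra)). apply Rabs_le_between in Hb.
      pose proof (exp_pos (- xi * x)). nra. }
  assert (Hlo : RInt (fun s => - (K * s * exp (- xi * s))) 0 t <= RInt (fun s => exp (- xi * s) * G s) 0 t).
  { apply RInt_le; auto.
    - eapply ex_RInt_ext. 2: apply (Hex2 (-1)). intros; simpl; ring.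
    - intros x Hx. specialize (Hb x ltac:(lra)). apply Rabs_le_between in Hb.
      pose proof (exp_pos (- xi * x)). nra. }
  rewrite int_sexp in Hup by auto. rewrite int_msexp in Hlo by auto.
  set (I := RInt _ 0 t) in *.
  pose proof (exp_pos (- xi * t)) as Hep.
  assert (HeI : exp (- xi * t) * (xi * t) <= 1).
  { pose proof (exp_ineq1_le (xi * t)).
    replace (- xi * t) with (- (xi * t)) by ring. rewrite exp_Ropp.
    pose proof (exp_pos (xi * t)).
    apply Rmult_le_reg_l with (exp (xi * t)); auto.
    rewrite <- Rmult_assoc, Rinv_r by lra. nra. }
  assert (HG := Hb t ltac:(lra)).
  assert (HA : Rabs (exp (- xi * t) * G t) <= K / xi).
  { rewrite Rabs_mult, Rabs_right by lra.
    apply Rmult_le_reg_l with xi; auto. replace (xi * (K / xi)) with K by (field; lra).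
    assert (exp (- xi * t) * Rabs (G t) <= exp (- xi * t) * (K * t)) by (apply Rmult_le_compat_l; lra).
    nra. }
  assert (HB : Rabs (xi * I) <= K / xi).
  { assert (Ht1 : 0 <= K * (t / xi + 1 / xi ^ 2) * exp (- xi * t)).
    { apply Rmult_le_pos; [apply Rmult_le_pos|]; try lra.
      assert (0 < 1/xi^2) by (apply Rdiv_lt_0_compat; nra).
      assert (0 <= t/xi) by (apply Rdiv_le_0_compat; lra). lra. }
    assert (Hk : K / xi = xi * (K / xi ^ 2)) by (field; lra).
    rewrite Hk, Rabs_mult, (Rabs_right xi) by lra.
    apply Rmult_le_compat_l. lra. apply Rabs_le. lra. }
  eapply Rle_trans. apply Rabs_triang. lra.
Qed.

Lemma RInt_id (a b : R) : RInt (fun x => x) a b = b ^ 2 / 2 - a ^ 2 / 2.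
Proof.
  apply is_RInt_unique.
  refine (is_RInt_derive (fun x => x ^ 2 / 2) _ a b _ _).
  - intros x _. auto_derive; auto. field.
  - intros x _. apply cont_of_der. auto_derive. auto.
Qed.

Lemma RInt_sq (a b : R) : RInt (fun x => x ^ 2) a b = b ^ 3 / 3 - a ^ 3 / 3.
Proof.
  apply is_RInt_unique.
  refine (is_RInt_derive (fun x => x ^ 3 / 3) _ a b _ _).
  - intros x _. auto_derive; auto. field.
  - intros x _. apply cont_of_der. auto_derive. auto.
Qed.

Theorem corollary6 (lam v1 v2 t : R) (j : nat) :
  0 < lam -> v2 < v1 -> ((v2 < 0 /\ 0 < v1) \/ (0 < v2 /\ v2 < v1)) ->
  0 <= t -> (j = 1%nat \/ j = 2%nat) ->
  is_lim (fun xi => msd_Delta lam v1 v2 j xi t) p_infty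
         (expect_free lam v1 v2 j (fun x => x ^ 2) t)
  /\ expect_free lam v1 v2 j (fun x => x ^ 2) t
     = t ^ 2 * (3 * (vel v1 v2 j) ^ 2 + lam * t * (v1 ^ 2 + v1 * v2 + v2 ^ 2))
       / (3 * (1 + lam * t)).
Proof.
  intros Hl H12 _ Ht _.
  set (v := vel v1 v2 j).
  set (G1 := fun s => v * s / (1 + lam * s)
      + lam / ((v1 - v2) * (1 + lam * s)) * ((v1 * s) ^ 2 / 2 - (v2 * s) ^ 2 / 2)).
  set (G2 := fun s => (v * s) ^ 2 / (1 + lam * s)
      + lam / ((v1 - v2) * (1 + lam * s)) * ((v1 * s) ^ 3 / 3 - (v2 * s) ^ 3 / 3)).
  assert (E1 : forall s, expect_free lam v1 v2 j (fun x => x) s = G1 s).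
  { intros s. unfold expect_free, G1. rewrite RInt_id. reflexivity. }
  assert (E2 : forall s, expect_free lam v1 v2 j (fun x => x ^ 2) s = G2 s).
  { intros s. unfold expect_free, G2. rewrite RInt_sq. reflexivity. }
  assert (Hd : v1 - v2 <> 0) by lra.
  assert (G2f : forall s, 0 <= s -> G2 s
     = s ^ 2 * (3 * v ^ 2 + lam * s * (v1 ^ 2 + v1 * v2 + v2 ^ 2)) / (3 * (1 + lam * s))).
  { intros s Hs. unfold G2. field. split; nra. }
  split.
  2:{ rewrite E2, G2f by lra. reflexivity. }
  set (Q := v1 ^ 2 + v1 * v2 + v2 ^ 2) in G2f.
  assert (HQ : 0 <= Q) by (unfold Q; nra).
  assert (L1 : is_lim (fun xi => expect_reset lam xi v1 v2 j (fun x => x) t) p_infty 0).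
  { eapply is_lim_ext.
    2: apply (decay G1 (Rabs v + Rabs v1 + Rabs v2) t Ht).
    - intros xi. unfold expect_reset. rewrite E1. f_equal. f_equal.
      apply RInt_ext. intros x _. rewrite E1. reflexivity.
    - pose proof (Rabs_pos v); pose proof (Rabs_pos v1); pose proof (Rabs_pos v2); lra.
    - intros s Hs. apply cont_of_der. unfold G1. assert (0 < 1 + lam*s) by nra. auto_derive. repeat split; try apply Rmult_integral_contrapositive_currified; lra.
    - intros s Hs.
      assert (Hg : G1 s = s * (v + lam * s * ((v1 + v2) / 2)) / (1 + lam * s)).
      { unfold G1. field. split; nra. }
      rewrite Hg. apply Rabs_le.
      pose proof (Rabs_pos v); pose proof (Rabs_pos v1); pose proof (Rabs_pos v2).
      pose proof (Rle_abs v); pose proof (Rle_abs v1); pose proof (Rle_abs v2).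
      pose proof (Rabs_maj2 v); pose proof (Rabs_maj2 v1); pose proof (Rabs_maj2 v2).
      set (K := Rabs v + Rabs v1 + Rabs v2) in *.
      assert (HD : 0 < 1 + lam * s) by nra.
      assert (Hw : - K <= (v1 + v2) / 2 <= K) by (idtac; match goal with |- _ => idtac end; unfold K; lra).
      assert (Hn : - (K * s * (1 + lam * s)) <= s * (v + lam * s * ((v1 + v2) / 2))
                   <= K * s * (1 + lam * s)).
      { assert (0 <= lam * s) by nra.
        assert (0 <= lam * s * s) by nra.
        assert (0 <= (K - v) * s) by (apply Rmult_le_pos; unfold K in *; lra).
        assert (0 <= (K + v) * s) by (apply Rmult_le_pos; unfold K in *; lra).
        assert (0 <= (K - (v1+v2)/2) * (lam * s * s)) by (apply Rmult_le_pos; lra).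
        assert (0 <= (K + (v1+v2)/2) * (lam * s * s)) by (apply Rmult_le_pos; lra).
        split; nra. }
      split.
      + apply Rmult_le_reg_r with (1 + lam * s); auto.
        unfold Rdiv. rewrite Rmult_assoc, Rinv_l by lra. lra.
      + apply Rmult_le_reg_r with (1 + lam * s); auto.
        unfold Rdiv. rewrite Rmult_assoc, Rinv_l by lra. lra. }
  assert (L2 : is_lim (fun xi => expect_reset lam xi v1 v2 j (fun x => x ^ 2) t) p_infty 0).
  { eapply is_lim_ext.
    2: apply (decay G2 (t * (v ^ 2 + Q)) t Ht).
    - intros xi. unfold expect_reset. rewrite E2. f_equal. f_equal.
      apply RInt_ext. intros x _. rewrite E2. reflexivity.
    - apply Rmult_le_pos; nra.
    - intros s Hs. apply cont_of_der. unfold G2. assert (0 < 1 + lam*s) by nra. auto_derive. repeat split; try apply Rmult_integral_contrapositive_currified; lra.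
    - intros s Hs. rewrite G2f by lra.
      assert (HD : 0 < 1 + lam * s) by nra.
      assert (H0 : 0 <= s ^ 2 * (3 * v ^ 2 + lam * s * Q)) by
        (apply Rmult_le_pos; [nra| assert (0 <= lam * s) by nra; nra]).
      rewrite Rabs_right.
      2:{ apply Rle_ge. apply Rdiv_le_0_compat; lra. }
      apply Rmult_le_reg_r with (3 * (1 + lam * s)). lra.
      unfold Rdiv. rewrite Rmult_assoc, Rinv_l by lra. rewrite Rmult_1_r.
      assert (s ^ 2 * (3 * v ^ 2 + lam * s * Q) <= s * s * (3 * (v^2 + Q) * (1 + lam * s))).
      { replace (s * s * (3 * (v^2 + Q) * (1 + lam * s))) with (s ^ 2 * (3 * (v^2 + Q) * (1 + lam * s))) by ring. apply Rmult_le_compat_l. nra. assert (0 <= lam * s) by nra. assert (0 <= lam * s * v^2) by (apply Rmult_le_pos; nra). assert (0 <= lam * s * Q) by (apply Rmult_le_pos; nra). nra. }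
      assert (s * s * (v^2+Q) <= t * s * (v^2 + Q)).
      { apply Rmult_le_compat_r. nra. nra. }
      nra. }
  set (F1 := expect_free lam v1 v2 j (fun x => x) t).
  set (F2 := expect_free lam v1 v2 j (fun x => x ^ 2) t).
  pose proof (is_lim_plus' _ _ _ _ _ L2 (is_lim_const F2 p_infty)) as L3.
  pose proof (is_lim_scal_l _ (2 * F1) _ _ L1) as L4.
  simpl in L4.
  pose proof (is_lim_minus' _ _ _ _ _ L3 L4) as L5.
  replace (0 + F2 - 2 * F1 * 0) with F2 in L5 by ring.
  eapply is_lim_ext. 2: exact L5.
  intros xi. unfold msd_Delta. fold F1 F2. ring.
Qed.
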